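(* Let $L$ be a non-degenerate indefinite lattice of rank $\geq 5$, and $N$ a natural number. Then $L$ contains a primitive rank $2$ sublattice $\Lambda$ of signature $(1,1)$ such that $|q(x,x)|\geq N$ for every nonzero $x\in\Lambda$.
   Context: A lattice is a free abelian group $L\cong\mathbb{Z}^n$ with an integer-valued quadratic form $q$. A sublattice $\Lambda\subset L$ is primitive if $L/\Lambda$ is torsion-free. *)

(* Defs.v *)
(* A lattice of rank n is Z^n (row vectors 'rV[int]_n)
   with an integer symmetric bilinear form given by its Gram matrix A. *)
From HB Require Import structures.
From mathcomp Require Import all_boot all_order all_algebra.
Set Implicit Arguments. Unset Strict Implicit. Unset Printing Implicit Defensive.
Import Order.TTheory GRing.Theory Num.Theory.
Local Open Scope ring_scope.

Definition bil n (A : 'M[int]_n) (x y : 'rV[int]_n) : int := (x *m A *m y^T) 0 0.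

Definition sym_gram n (A : 'M[int]_n) : Prop := A^T = A.

Definition lat_nondeg n (A : 'M[int]_n) : Prop := \det A != 0.

Definition lat_indef n (A : 'M[int]_n) : Prop :=
  (exists x, 0 < bil A x x) /\ (exists y, bil A y y < 0).

Definition in_span2 n (u v w : 'rV[int]_n) : Prop :=
  exists a b : int, w = a *: u + b *: v.

Definition rank2 n (u v : 'rV[int]_n) : Prop :=
  forall a b : int, a *: u + b *: v = 0 -> a = 0 /\ b = 0.

(* L / Lambda is torsion-free *)
Definition primitive2 n (u v : 'rV[int]_n) : Prop :=
  forall (k : int) (x : 'rV[int]_n), k != 0 -> in_span2 u v (k *: x) -> in_span2 u v x.

Definition gram2 n (A : 'M[int]_n) (u v : 'rV[int]_n) : 'M[int]_2 :=
  \matrix_(i < 2, j < 2)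
    bil A (if i == 0 :> nat then u else v) (if j == 0 :> nat then u else v).

Definition sig11 n (A : 'M[int]_n) (u v : 'rV[int]_n) : Prop :=
  \det (gram2 A u v) != 0 /\
  (exists x, in_span2 u v x /\ 0 < bil A x x) /\
  (exists y, in_span2 u v y /\ bil A y y < 0).

(* Main.v *)
Require Import Defs.
From HB Require Import structures.
From mathcomp Require Import all_boot all_order all_algebra.
From mathcomp Require Import zify ring lra.
From Stdlib Require Import Classical.
Set Implicit Arguments. Unset Strict Implicit. Unset Printing Implicit Defensive.
Import Order.TTheory GRing.Theory Num.Theory.
Local Open Scope ring_scope.

Section Bil.
Variable R : comNzRingType.
Variable n : nat.
Variable A : 'M[R]_n.
Definition bf (x y : 'rV[R]_n) : R := (x *m A *m y^T) 0 0.
Lemma bfDl x y z : bf (x + y) z = bf x z + bf y z.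
Proof. by rewrite /bf !mulmxDl mxE. Qed.
Lemma bfDr x y z : bf x (y + z) = bf x y + bf x z.
Proof. by rewrite /bf linearD /= mulmxDr mxE. Qed.
Lemma bfZl a x z : bf (a *: x) z = a * bf x z.
Proof. by rewrite /bf -!scalemxAl mxE. Qed.
Lemma bfZr a x z : bf x (a *: z) = a * bf x z.
Proof. by rewrite /bf linearZ /= -scalemxAr mxE. Qed.
Lemma bf0l z : bf 0 z = 0.
Proof. by rewrite /bf !mul0mx mxE. Qed.
Lemma bf0r z : bf z 0 = 0.
Proof. by rewrite /bf trmx0 mulmx0 mxE. Qed.
Lemma bfNl x z : bf (- x) z = - bf x z.
Proof. by rewrite -scaleN1r bfZl mulN1r. Qed.
Lemma bfNr x z : bf x (- z) = - bf x z.
Proof. by rewrite -scaleN1r bfZr mulN1r. Qed.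
Lemma bfC : A^T = A -> forall x y, bf x y = bf y x.
Proof.
move=> sA x y; rewrite /bf.
transitivity ((x *m A *m y^T)^T 0 0); first by rewrite [RHS]mxE.
by rewrite !trmx_mul trmxK sA mulmxA.
Qed.
Lemma bf_span (sA : A^T = A) s t u v :
  bf (s *: u + t *: v) (s *: u + t *: v) =
  s ^+ 2 * bf u u + 2%:R * s * t * bf u v + t ^+ 2 * bf v v.
Proof.
rewrite !bfDl !bfDr !bfZl !bfZr (bfC sA v u).
rewrite !expr2 mulr2n !mulrDl mul1r. 
rewrite !mulrA. rewrite -!addrA. congr (_ + _). rewrite addrC -!addrA. congr (_ + _).
 by rewrite [t * s]mulrC. by rewrite addrC.
Qed.
Lemma bf_shift (sA : A^T = A) y1 y2 w1 w2 (m : R) :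
  bf (y1 + m *: w1) (y2 + m *: w2) =
  bf y1 y2 + m * (bf w1 y2 + bf y1 w2 + m * bf w1 w2).
Proof. rewrite !bfDl !bfDr !bfZl !bfZr; ring. Qed.
End Bil.

Lemma det22 (R : comNzRingType) (M : 'M[R]_2) : \det M = M 0 0 * M 1 1 - M 0 1 * M 1 0.
Proof.
rewrite (expand_det_row _ 0) !big_ord_recr big_ord0 /= /cofactor !det_mx11 !mxE /=.
have e1 : (lift 0 0 : 'I_2) = 1 by apply/val_inj.
have e2 : (widen_ord (leqnSn 1) ord_max : 'I_2) = 0 by apply/val_inj.
have e3 : (ord_max : 'I_2) = 1 by apply/val_inj.
have e4 : (lift 1 0 : 'I_2) = 0 by apply/val_inj.
rewrite e2 e3 e1 e4 add0r expr0 mul1r expr1 mulN1r mulrN.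
done.
Qed.

Lemma rowK2 (R : comNzRingType) n (K : 'M[R]_2) (X : 'M[R]_(2, n)) (i : 'I_2) :
  row i (K *m X) = K i 0 *: row 0 X + K i 1 *: row 1 X.
Proof.
rewrite row_mul mulmx_sum_row !big_ord_recr big_ord0 /= add0r !mxE.
have e2 : (widen_ord (leqnSn 1) ord_max : 'I_2) = 0 by apply/val_inj.
have e3 : (ord_max : 'I_2) = 1 by apply/val_inj.
by rewrite e2 e3.
Qed.

Lemma mul22 (R : comNzRingType) m k (X : 'M[R]_(m, 2)) (Y : 'M[R]_(2, k)) i j :
  (X *m Y) i j = X i 0 * Y 0 j + X i 1 * Y 1 j.
Proof.
rewrite !mxE !big_ord_recr big_ord0 /= add0r.
have e2 : (widen_ord (leqnSn 1) ord_max : 'I_2) = 0 by apply/val_inj.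
have e3 : (ord_max : 'I_2) = 1 by apply/val_inj.
by rewrite e2 e3.
Qed.

Lemma posR (a b c m : int) : 0 < m -> 0 < c ->
  exists R : int, 0 < a + (m * R) * (b + b + (m * R) * c).
Proof.
move=> m0 c0; exists (`|a| + `|b| + `|b| + 1).
have ha : - `|a| <= a by rewrite lerNnormlW.
have hb : - `|b| <= b by rewrite lerNnormlW.
have na : 0 <= `|a| by [].
have nb : 0 <= `|b| by [].
set R := `|a| + `|b| + `|b| + 1.
have R1 : 1 <= R by rewrite /R; lia.
have T1 : R <= m * R by nia.
set T := m * R.
have Tc : T <= T * c by nia.
have X1 : `|a| + 1 <= b + b + T * c by lia.
have : b + b + T * c <= T * (b + b + T * c) by nia.
lia.
Qed.


Section Fp.
Variable p : nat.
Hypothesis pP : prime p.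
Hypothesis p2 : (2 < p)%N.

Lemma natF0 k : (k%:R == 0 :> 'F_p) = (p %| k)%N.
Proof. by rewrite (dvdn_pcharf (pchar_Fp pP)). Qed.

Lemma natF0_small d : (d < p)%N -> (d%:R = 0 :> 'F_p) -> d = 0%N.
Proof.
move=> dp /eqP; rewrite natF0 => /dvdn_leq; case: d dp => // d dp H.
by have := H isT; lia.
Qed.

Lemma pE : p = (p./2).*2.+1.
Proof.
have o : odd p.
  by case: (even_prime pP) => // p2e; move: p2; rewrite p2e.
by rewrite -[LHS]odd_double_half o add1n.
Qed.

Lemma sqinj (k l : 'I_(p./2).+1) : (k%:R ^+2 = l%:R ^+2 :> 'F_p) -> k = l.
Proof.
move/eqP; rewrite -subr_eq0 subr_sqr mulf_eq0 => /orP[|].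
  rewrite subr_eq0 => /eqP H; apply/val_inj => /=.
  have kp : (k < p)%N by have := ltn_ord k; have := pE; lia.
  have lp : (l < p)%N by have := ltn_ord l; have := pE; lia.
  case: (leqP k l) => kl.
    have HH := @natF0_small (l - k)%N; rewrite natrB // H subrr in HH.
    suff : (l - k = 0)%N by lia.
    by apply: HH => //; lia.
  have HH := @natF0_small (k - l)%N; rewrite natrB ?H ?subrr in HH; last by lia.
  suff : (k - l = 0)%N by lia.
  by apply: HH => //; lia.
move/eqP; rewrite -natrD => /natF0_small H; apply/val_inj => /=.
have := ltn_ord k; have := ltn_ord l; have := pE => *.
have : (k + l = 0)%N by apply: H; lia.
lia.
Qed.

Lemma two_sq (a b c : 'F_p) : a != 0 -> b != 0 ->
  exists x y, a * x ^+ 2 + b * y ^+ 2 = c.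
Proof.
move=> a0 b0.
pose f1 := fun k : 'I_(p./2).+1 => a * (k%:R) ^+ 2 : 'F_p.
pose f2 := fun k : 'I_(p./2).+1 => c - b * (k%:R) ^+ 2 : 'F_p.
have i1 : injective f1 by move=> k l; rewrite /f1 => /mulfI => /(_ a0) /sqinj.
have i2 : injective f2.
  by move=> k l; rewrite /f2 => /addrI /oppr_inj /mulfI => /(_ b0) /sqinj.
have := cardsUI [set f1 x | x in 'I_(p./2).+1] [set f2 x | x in 'I_(p./2).+1].
rewrite !card_imset // card_ord.
have := max_card ([set f1 x | x in 'I_(p./2).+1] :|: [set f2 x | x in 'I_(p./2).+1]).
rewrite card_Fp // => H1 H2.
have : [set f1 x | x in 'I_(p./2).+1] :&: [set f2 x | x in 'I_(p./2).+1] != set0.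
  rewrite -card_gt0; have := pE; lia.
case/set0Pn => z; rewrite inE => /andP[/imsetP[k _ ->] /imsetP[l _]].
rewrite /f1 /f2 => /eqP; rewrite eq_sym subr_eq => /eqP E.
by exists k%:R, l%:R; rewrite E addrC.
Qed.

Lemma nonres : exists e : 'F_p, forall x, x ^+ 2 != e.
Proof.
case: (boolP [exists e : 'F_p, [forall x, x ^+2 != e]]) => [/existsP [e /forallP H]|H].
  by exists e.
have Hs : forall e : 'F_p, exists x, e = x ^+ 2.
  move=> e; move: H; rewrite negb_exists => /forallP /(_ e).
  by rewrite negb_forall => /existsP [x]; rewrite negbK => /eqP <-; exists x.
have : #|[seq x ^+ 2 | x in 'F_p]| == #|'F_p|.
  rewrite eqn_leq leq_image_card /=; apply: subset_leq_card.
  by apply/subsetP => e _; case: (Hs e) => x ->; apply/imageP; exists x.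
move/image_injP => inj.
have := inj 1 (-1) isT isT; rewrite expr1n sqrrN expr1n => /(_ erefl) /eqP.
rewrite -subr_eq0 opprK -[1 + 1]/(2%:R : 'F_p) => /eqP /(natF0_small p2) //.
Qed.
End Fp.

Section Iso.
Variable F : fieldType.
Variable n : nat.
Variable A : 'M[F]_n.
Hypothesis sA : A^T = A.
Hypothesis H2 : forall a b c : F, a != 0 -> b != 0 -> exists x y, a * x ^+ 2 + b * y ^+ 2 = c.

Lemma ker_nz k (C : 'M[F]_(n,k)) : (k < n)%N -> exists w : 'rV_n, w != 0 /\ w *m C = 0.
Proof.
move=> kn; have : kermx C != 0.
  by rewrite -mxrank_eq0 mxrank_ker; have := rank_leq_col C; lia.
by case/rowV0Pn => w /sub_kermxP wC w0; exists w.
Qed.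

Lemma bf_col (e f : 'rV[F]_n) : e *m (A *m f^T) = 0 -> bf A e f = 0.
Proof. by rewrite /bf mulmxA => ->; rewrite mxE. Qed.

Lemma row2_eq0 k (w : 'rV[F]_n) (C : 'M_(n,k)) (c : 'cV_n) :
  w *m row_mx C c = 0 -> w *m C = 0 /\ w *m c = 0.
Proof. by rewrite mul_mx_row => /eqP; rewrite row_mx_eq0 => /andP[/eqP -> /eqP ->]. Qed.

Lemma iso k (C : 'M[F]_(n,k)) : (k + 3 <= n)%N ->
  exists w, w != 0 /\ w *m C = 0 /\ bf A w w = 0.
Proof.
move=> kn.
have [[e1 [e1C q1]] | N1] := classic (exists e1, e1 *m C = 0 /\ bf A e1 e1 != 0); last first.
  have [w [w0 wC]] := ker_nz (k := k) C ltac:(lia).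
  exists w; split=> //; split=> //; apply/eqP/negP => /negP q.
  by apply: N1; exists w.
pose C1 := row_mx C (A *m e1^T).
have [[e2 [e2C q2]] | N2] := classic (exists e2, e2 *m C1 = 0 /\ bf A e2 e2 != 0); last first.
  have [w [w0 wC]] := ker_nz C1 ltac:(lia).
  exists w; split=> //; split; first by case: (row2_eq0 wC).
  apply/eqP/negP => /negP q; by apply: N2; exists w.
pose C2 := row_mx C1 (A *m e2^T).
have [e3 [e30 e3C]] := ker_nz C2 ltac:(lia).
have [e3C1 e3e2] := row2_eq0 e3C.
have [e3C' e3e1] := row2_eq0 e3C1.
have [e2C' e2e1] := row2_eq0 e2C.
have b21 := bf_col e2e1; have b31 := bf_col e3e1; have b32 := bf_col e3e2.
have b12 : bf A e1 e2 = 0 by rewrite bfC.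
have b13 : bf A e1 e3 = 0 by rewrite bfC.
have b23 : bf A e2 e3 = 0 by rewrite bfC.
have [q3|q3] := eqVneq (bf A e3 e3) 0.
  by exists e3.
have [x [y Hxy]] := H2 (- bf A e3 e3) q1 q2.
exists (x *: e1 + y *: e2 + e3); split; last split.
- apply/negP => /eqP w0.
  have h1 : bf A (x *: e1 + y *: e2 + e3) e1 = 0 by rewrite w0 bf0l.
  have h2 : bf A (x *: e1 + y *: e2 + e3) e2 = 0 by rewrite w0 bf0l.
  rewrite !bfDl !bfZl b21 b31 mulr0 !addr0 in h1.
  rewrite !bfDl !bfZl b12 b32 mulr0 add0r addr0 in h2.
  move/eqP: h1; rewrite mulf_eq0 (negbTE q1) orbF => h1.
  move/eqP: h2; rewrite mulf_eq0 (negbTE q2) orbF => h2.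
  move: w0; rewrite (eqP h1) (eqP h2) !scale0r !add0r => e30'.
  by rewrite e30' eqxx in e30.
- by rewrite !mulmxDl -!scalemxAl e1C e2C' e3C' !scaler0 !addr0.
- rewrite !bfDl !bfDr !bfZl !bfZr b12 b13 b21 b23 b31 b32 !mulr0 !addr0 !add0r.
  have -> : x * (x * bf A e1 e1) + y * (y * bf A e2 e2) =
    bf A e1 e1 * x ^+ 2 + bf A e2 e2 * y ^+ 2 by rewrite !expr2; ring.
  by rewrite Hxy addNr.
Qed.

Lemma dual (e : 'rV[F]_n) : A \in unitmx -> e != 0 -> exists f, bf A e f = 1.
Proof.
move=> Au e0.
have eA : e *m A != 0.
  apply/negP => /eqP eA0; move: e0; rewrite -(mulmxK Au e) eA0 mul0mx eqxx //.
have [j cj] : exists j, (e *m A) 0 j != 0.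
  apply/not_all_not_ex => H; move/negP: eA; apply; apply/eqP/matrixP => i j.
  rewrite ord1 [RHS]mxE; apply/eqP; move/negP: (H j); by rewrite negbK.
exists (((e *m A) 0 j)^-1 *: delta_mx 0 j).
rewrite bfZr /bf trmx_delta -colE [col _ _ _ _]mxE mulVf //.
Qed.

Lemma plane : (5 <= n)%N -> A \in unitmx ->
  exists u0 v0 z1 z2 : 'rV[F]_n,
  [/\ bf A u0 u0 = 0, bf A v0 v0 = 0, bf A u0 v0 = 0 &
      [/\ bf A u0 z1 = 1, bf A v0 z1 = 0, bf A u0 z2 = 0 & bf A v0 z2 = 1]].
Proof.
move=> n5 Au.
have [e [e0 [_ qe]]] := iso (0 : 'M_(n,0)) ltac:(lia).
have [f ef] := dual Au e0.
have [g [g0 [gC qg]]] := iso (row_mx (A *m e^T) (A *m f^T)) ltac:(lia).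
have [ge gf] := row2_eq0 gC.
have bge := bf_col ge; have bgf := bf_col gf.
have [h gh] := dual Au g0.
exists e, g, f, (h - bf A e h *: f); split => //; first by rewrite bfC.
split => //.
  by rewrite bfDr bfNr bfZr ef mulr1 subrr.
by rewrite bfDr bfNr bfZr bgf mulr0 subr0.
Qed.
End Iso.

Section Int.
Variable p : nat.
Hypothesis pP : prime p.
Hypothesis p2 : (2 < p)%N.

Lemma natF0' k : (k%:R == 0 :> 'F_p) = (p %| k)%N.
Proof. by rewrite (dvdn_pcharf (pchar_Fp pP)). Qed.

Lemma redF0 (z : int) : ((z%:~R : 'F_p) == 0) = (p %| z)%Z.
Proof.
rewrite dvdzE; case: z => k /=.
  by rewrite -natF0'.
by rewrite NegzE mulrNz oppr_eq0 -natF0'.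
Qed.

Lemma redp : ((p%:Z)%:~R : 'F_p) = 0.
Proof. by apply/eqP; rewrite redF0 dvdzz. Qed.


Lemma KL (e : 'F_p) (he : forall x, x ^+ 2 != e) (a b c : int)
  (ha : (a%:~R : 'F_p) = 1) (hb : (b%:~R : 'F_p) = 0) (hc : (c%:~R : 'F_p) = - e) (s t : int) :
  ~~ ((p %| s)%Z && (p %| t)%Z) -> ~~ (p %| s ^+ 2 * a + 2%:R * s * t * b + t ^+ 2 * c)%Z.
Proof.
move=> nst; rewrite -redF0 !intrD !intrM ha hb hc mulr1 mulr0 addr0.
apply/negP => /eqP H.
have [t0|t0] := eqVneq (t%:~R : 'F_p) 0.
  move: H; rewrite t0 !mul0r addr0 => /eqP; rewrite mulf_eq0 orbb => s0.
  by move: nst; rewrite -!redF0 s0 t0 eqxx.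
have E : (s%:~R : 'F_p) * s%:~R = e * (t%:~R * t%:~R).
  by apply/eqP; rewrite -subr_eq0 -H; apply/eqP; ring.
have := he ((s%:~R : 'F_p) / t%:~R); rewrite expr2 mulrACA -invfM E mulfK ?eqxx //.
by rewrite mulf_neq0.
Qed.

Lemma ANI (e : 'F_p) (he : forall x, x ^+ 2 != e) (a b c : int)
  (ha : (a%:~R : 'F_p) = 1) (hb : (b%:~R : 'F_p) = 0) (hc : (c%:~R : 'F_p) = - e) (s t : int) :
  (s != 0) || (t != 0) ->
  s ^+ 2 * a + 2%:R * s * t * b + t ^+ 2 * c != 0.
Proof.
have p0 : p%:Z != 0 by rewrite eqz_nat -lt0n; lia.
move: {2}(`|s| + `|t|)%N.+1 (ltnSn (`|s| + `|t|)%N) => k.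
elim: k s t => // k IH s t lt nz.
case: (boolP ((p %| s)%Z && (p %| t)%Z)) => [/andP[/dvdzP[s1 es] /dvdzP[t1 et]] | nd]; last first.
  by apply/negP => /eqP H; move: (KL he ha hb hc nd); rewrite H dvdz0.
have nz1 : (s1 != 0) || (t1 != 0).
  rewrite -negb_and; apply/negP => /andP[/eqP s10 /eqP t10].
  by move: nz; rewrite es et s10 t10 !mul0r eqxx.
have lt1 : (`|s1| + `|t1| < k)%N.
  move: lt nz1; rewrite es et !abszM /= -!absz_gt0 => lt /orP nz1.
  case: nz1 => h; nia.
have := IH s1 t1 lt1 nz1.
rewrite es et.
have -> : (s1 * p%:Z) ^+ 2 * a + 2%:R * (s1 * p%:Z) * (t1 * p%:Z) * b + (t1 * p%:Z) ^+ 2 * c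
  = (p%:Z) ^+2 * (s1 ^+ 2 * a + 2%:R * s1 * t1 * b + t1 ^+ 2 * c) by ring.
by rewrite mulf_eq0 negb_or expf_eq0 (negbTE p0) andbF => ->.
Qed.

Lemma red_bf n (A : 'M[int]_n) x y :
  ((bf A x y)%:~R : 'F_p) = bf (map_mx (intr : int -> 'F_p) A) (map_mx intr x) (map_mx intr y).
Proof.
rewrite /bf; transitivity ((map_mx (intr : int -> 'F_p) (x *m A *m y^T)) 0 0).
  by rewrite [RHS]mxE.
by rewrite !map_mxM map_trmx.
Qed.

Definition liftF (x : 'F_p) : int := (nat_of_ord x)%:Z.
Lemma liftFK x : ((liftF x)%:~R : 'F_p) = x.
Proof. by rewrite /liftF -pmulrn natr_Zp. Qed.

Definition liftv n (v : 'rV['F_p]_n) : 'rV[int]_n := map_mx liftF v.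
Lemma liftvK n (v : 'rV['F_p]_n) : map_mx (intr : int -> 'F_p) (liftv v) = v.
Proof. by apply/matrixP => i j; rewrite !mxE liftFK. Qed.
End Int.


Lemma uv_exists n (A : 'M[int]_n) p (pP : prime p) (p2 : (2 < p)%N)
  (pd : ~~ (p %| \det A)%Z) (n5 : (5 <= n)%N) (sA : A^T = A) x0 y0
  (qx0 : 0 < bf A x0 x0) (qy0 : bf A y0 y0 < 0) :
  exists (u v : 'rV[int]_n) (e : 'F_p) (a b c : int),
  [/\ forall x, x ^+ 2 != e, (a%:~R : 'F_p) = 1, (b%:~R : 'F_p) = 0,
      (c%:~R : 'F_p) = - e &
   [/\ bf A u u = p%:Z * a, bf A u v = p%:Z * b, bf A v v = p%:Z * c,
       0 < bf A u u & bf A v v < 0]].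
Proof.
pose Ap := map_mx (intr : int -> 'F_p) A.
have sAp : Ap^T = Ap by rewrite /Ap map_trmx sA.
have uAp : Ap \in unitmx.
  by rewrite unitmxE unitfE /Ap det_map_mx redF0.
have [u0 [v0 [z1 [z2 [qu0 qv0 buv0 [bz1 bz2 bz3 bz4]]]]]] :=
  @plane _ _ Ap sAp (@two_sq p pP p2) n5 uAp.
have [e he] := nonres pP p2.
pose U0 := liftv u0; pose V0 := liftv v0; pose Z1 := liftv z1; pose Z2 := liftv z2.
have rU0 : map_mx intr U0 = u0 := liftvK u0.
have rV0 : map_mx intr V0 = v0 := liftvK v0.
have rZ1 : map_mx intr Z1 = z1 := liftvK z1.
have rZ2 : map_mx intr Z2 = z2 := liftvK z2.
have dv : forall x y, bf Ap (map_mx intr x) (map_mx intr y) = 0 -> exists m, bf A x y = p%:Z * m.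
  move=> x y; rewrite -red_bf => /eqP; rewrite (redF0 pP) => /dvdzP [m ->].
  by exists m; rewrite mulrC.
have [a0 ea0] : exists a0, bf A U0 U0 = p%:Z * a0 by apply: dv; rewrite rU0.
have [b0 eb0] : exists b0, bf A U0 V0 = p%:Z * b0 by apply: dv; rewrite rU0 rV0.
have [c0 ec0] : exists c0, bf A V0 V0 = p%:Z * c0 by apply: dv; rewrite rV0.
have two0 : (2%:R : 'F_p) != 0 by rewrite (natF0' pP); apply/negP => /(dvdn_leq (isT : (0 < 2)%N)); lia.
pose al := @liftF p ((1 - a0%:~R) / 2%:R).
pose be := @liftF p (- b0%:~R).
pose ga := @liftF p ((- e - c0%:~R) / 2%:R).
pose Y := U0 + (p%:Z * al) *: Z1.
have pp0 : 0 < p%:Z * p%:Z by rewrite mulr_gt0 // ltz_nat; lia.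
have [R hR] := posR (bf A Y Y) (bf A Y x0) pp0 qx0.
pose Y' := V0 + p%:Z *: (be *: Z1 + ga *: Z2).
have qy0' : 0 < - bf A y0 y0 by rewrite oppr_gt0.
have [R' hR'] := posR (- bf A Y' Y') (- bf A Y' y0) pp0 qy0'.
pose W1 := al *: Z1 + (p%:Z * R) *: x0.
pose W2 := be *: Z1 + ga *: Z2 + (p%:Z * R') *: y0.
have rW1 : map_mx intr W1 = ((1 - a0%:~R) / 2%:R) *: z1.
  by apply/matrixP => i j; rewrite !mxE intrD !intrM (redp pP) !mul0r addr0 /al !liftFK.
have rW2 : map_mx intr W2 = (- b0%:~R) *: z1 + ((- e - c0%:~R) / 2%:R) *: z2.
  by apply/matrixP => i j; rewrite !mxE !intrD !intrM (redp pP) !mul0r addr0 /be /ga !liftFK.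
exists (U0 + p%:Z *: W1), (V0 + p%:Z *: W2), e,
  (a0 + (bf A W1 U0 + bf A U0 W1 + p%:Z * bf A W1 W1)),
  (b0 + (bf A W1 V0 + bf A U0 W2 + p%:Z * bf A W1 W2)),
  (c0 + (bf A W2 V0 + bf A V0 W2 + p%:Z * bf A W2 W2)).
split => //.
- rewrite !intrD !intrM (redp pP) mul0r addr0 !red_bf -/Ap rW1 rU0 bfZl bfZr (bfC sAp z1 u0) bz1.
  by field.
- rewrite !intrD !intrM (redp pP) mul0r addr0 !red_bf -/Ap rW1 rW2 rU0 rV0.
  rewrite !bfZl bfDr !bfZr (bfC sAp z1 v0) bz1 bz2 bz3; ring.
- rewrite !intrD !intrM (redp pP) mul0r addr0 !red_bf -/Ap rW2 rV0.
  rewrite bfDl bfDr !bfZl !bfZr (bfC sAp z1 v0) (bfC sAp z2 v0) bz2 bz4.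
  by field.
split.
- by rewrite bf_shift // ea0; ring.
- by rewrite bf_shift // eb0; ring.
- by rewrite bf_shift // ec0; ring.
- have -> : U0 + p%:Z *: W1 = Y + (p%:Z * p%:Z * R) *: x0.
    by rewrite /W1 /Y scalerDr !scalerA addrA !mulrA.
  by rewrite bf_shift // (bfC sA x0 Y).
- have -> : V0 + p%:Z *: W2 = Y' + (p%:Z * p%:Z * R') *: y0.
    by rewrite /W2 /Y' !scalerDr !scalerA !addrA !mulrA.
  rewrite bf_shift // (bfC sA y0 Y') -oppr_gt0.
  move: hR'; set T := (p%:Z * p%:Z * R'). 
  have -> : - bf A Y' Y' + T * (- bf A Y' y0 + - bf A Y' y0 + T * - bf A y0 y0) =
   - (bf A Y' Y' + T * (bf A Y' y0 + bf A Y' y0 + T * bf A y0 y0)) by ring.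
  done.
Qed.

Lemma final n (A : 'M[int]_n) p (pP : prime p) (p2 : (2 < p)%N) (n2 : (2 <= n)%N)
  (sA : A^T = A) (u v : 'rV[int]_n) (e : 'F_p) (a b c : int)
  (he : forall x, x ^+ 2 != e) (ha : (a%:~R : 'F_p) = 1) (hb : (b%:~R : 'F_p) = 0)
  (hc : (c%:~R : 'F_p) = - e)
  (qu : bf A u u = p%:Z * a) (buv : bf A u v = p%:Z * b) (qv : bf A v v = p%:Z * c)
  (pos : 0 < bf A u u) (neg : bf A v v < 0) :
  exists r0 r1 : 'rV[int]_n, [/\ rank2 r0 r1, primitive2 r0 r1, sig11 A r0 r1 &
     forall x, in_span2 r0 r1 x -> x != 0 -> (p%:Z <= `|bil A x x|)].
Proof.
have p0 : p%:Z != 0 by rewrite eqz_nat -lt0n; lia.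
have Qst : forall s t, bf A (s *: u + t *: v) (s *: u + t *: v) =
    p%:Z * (s ^+ 2 * a + 2%:R * s * t * b + t ^+ 2 * c).
  by move=> s t; rewrite bf_span // qu buv qv; ring.
pose M := \matrix_(i < 2, j < n) (if i == 0 :> nat then u 0 j else v 0 j).
have row0M : row 0 M = u by apply/matrixP => i j; rewrite !mxE ord1.
have row1M : row 1 M = v by apply/matrixP => i j; rewrite !mxE ord1.
have [L uL [R uR [d sd EM]]] := int_Smith_normal_form M.
set D := \matrix_(i, j) _ in EM.
pose w (i : 'I_2) := widen_ord n2 i.
pose r (i : 'I_2) := row (w i) R.
have rowD : forall i, row i (D *m R) = d`_i *: r i.
  move=> i; rewrite row_mul /r [row (w i) R]rowE scalemxAl; congr (_ *m _).
  apply/matrixP => k j; rewrite ord1 !mxE eqxx /= -(inj_eq val_inj) /=.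
  by rewrite mulr_natr eq_sym.
pose K := invmx L.
have KM : K *m M = D *m R by rewrite EM -!mulmxA mulKmx.
have HK : forall i : 'I_2, d`_i *: r i = K i 0 *: u + K i 1 *: v.
  by move=> i; rewrite -rowD -KM rowK2 row0M row1M.
have HL : forall i : 'I_2, row i M = L i 0 *: (d`_0 *: r 0) + L i 1 *: (d`_1 *: r 1).
  by move=> i; rewrite EM -mulmxA rowK2 !rowD.
have dvd01 : (d`_0 %| d`_1)%Z.
  by clear -sd; move: sd; case: d => [|x0 [|x1 s]] //= /andP[].
have KL11 : K 1 0 * L 0 1 + K 1 1 * L 1 1 = 1.
  have KL1 : K *m L = 1%:M by rewrite /K mulVmx.
  by have := congr1 (fun X : 'M[int]_2 => X 1 1) KL1; rewrite mul22 mxE.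
set k10 := K 1 0 in KL11 *; set k11 := K 1 1 in KL11 *.
have nd : ~~ ((p %| k10)%Z && (p %| k11)%Z).
  apply/negP => /andP[h0 h1].
  have : (p %| (k10 * L 0 1 + k11 * L 1 1)%R)%Z by rewrite rpredD // dvdz_mulr.
  by rewrite KL11 dvdzE /= => /(dvdn_leq (isT : (0 < 1)%N)); lia.
have pd1 : ~~ (p %| d`_1)%Z.
  apply/negP => /dvdzP [d' ed].
  have := KL pP he ha hb hc nd.
  have E := Qst k10 k11.
  rewrite -HK ed bfZl bfZr in E.
  set inner := (X in p%:Z * X) in E *.
  have Hi : inner = p%:Z * (d' * d' * bf A (r 1) (r 1)).
    by apply: (mulfI p0); rewrite -E; ring.
  have Hd : (p %| inner)%Z by rewrite Hi dvdz_mulr.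
  by move/negP; apply.
have d1n0 : d`_1 != 0 by apply: contraNneq pd1 => ->; rewrite dvdz0.
have spanP : forall x, in_span2 (r 0) (r 1) x -> in_span2 u v (d`_1 *: x).
  move=> x [s [t ->]]; have [k ek] := dvdzP dvd01.
  exists (s * k * K 0 0 + t * K 1 0), (s * k * K 0 1 + t * K 1 1).
  transitivity ((s * k) *: (d`_0 *: r 0) + t *: (d`_1 *: r 1)).
    by apply/matrixP => i j; rewrite !mxE ek; ring.
  by rewrite (HK 0) (HK 1); apply/matrixP => i j; rewrite !mxE; ring.
have Pu : in_span2 (r 0) (r 1) u.
  exists (L 0 0 * d`_0), (L 0 1 * d`_1); rewrite -row0M HL.
  by apply/matrixP => i j; rewrite !mxE; ring.
have Pv : in_span2 (r 0) (r 1) v.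
  exists (L 1 0 * d`_0), (L 1 1 * d`_1); rewrite -row1M HL.
  by apply/matrixP => i j; rewrite !mxE; ring.
have Panis : forall x, in_span2 (r 0) (r 1) x -> x != 0 ->
    bf A x x != 0 /\ (p %| bf A x x)%Z.
  move=> x hx x0; have [s [t est]] := spanP x hx.
  have nz : (s != 0) || (t != 0).
    rewrite -negb_and; apply/negP => /andP[/eqP s0 /eqP t0].
    move: est; rewrite s0 t0 !scale0r addr0 => /eqP; rewrite scalemx_eq0.
    by rewrite (negbTE d1n0) (negbTE x0).
  have E := Qst s t; rewrite -est bfZl bfZr in E.
  have inz := ANI pP p2 he ha hb hc nz.
  split.
    apply/negP => /eqP q0; move: E; rewrite q0 !mulr0 => /esym /eqP.
    by rewrite mulf_eq0 (negbTE p0) (negbTE inz).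
  have : (p %| d`_1 * (d`_1 * bf A x x))%Z by rewrite E dvdz_mulr.
  rewrite !dvdzE !abszM !Euclid_dvdM //.
  by move: pd1; rewrite dvdzE => /negbTE ->.
have rE : forall a' b', a' *: r 0 + b' *: r 1 = (a' *: 'e_(w 0) + b' *: 'e_(w 1)) *m R.
  by move=> a' b'; rewrite mulmxDl -!scalemxAl -!rowE.
have w01 : (w 1 == w 0) = false by rewrite /w -(inj_eq val_inj).
have w10 : (w 0 == w 1) = false by rewrite /w -(inj_eq val_inj).
have ent : forall a' b' (j : 'I_n),
    (a' *: 'e_(w 0) + b' *: 'e_(w 1) : 'rV[int]_n) 0 j =
    a' * (w 0 == j)%:R + b' * (w 1 == j)%:R.
  by move=> a' b' j; rewrite !mxE eqxx /= ![j == _]eq_sym.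
have cancR : forall X Y : 'rV[int]_n, X *m R = Y *m R -> X = Y.
  by move=> X Y H; rewrite -[X](mulmxK uR) H mulmxK.
have rk : rank2 (r 0) (r 1).
  move=> a' b'; rewrite rE -(mul0mx _ R) => /cancR H.
  have h0 := congr1 (fun X : 'rV[int]_n => X 0 (w 0)) H.
  have h1 := congr1 (fun X : 'rV[int]_n => X 0 (w 1)) H.
  move: h0 h1; rewrite /= !ent eqxx w01 w10 !mxE /=.
  by rewrite !mulr1 !mulr0 addr0 add0r.
exists (r 0), (r 1); split => //.
- move=> k x k0 [a' [b' H]].
  pose y := x *m invmx R.
  have xy : x = y *m R by rewrite /y mulmxKV.
  have Hy : k *: y = a' *: 'e_(w 0) + b' *: 'e_(w 1).
    by apply: cancR; rewrite -rE -H -scalemxAl -xy.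
  have y0 : forall j, w 0 != j -> w 1 != j -> y 0 j = 0.
    move=> j h0 h1; have := congr1 (fun X : 'rV[int]_n => X 0 j) Hy.
    rewrite /= ent (negbTE h0) (negbTE h1) !mulr0 addr0 mxE => /eqP.
    by rewrite mulf_eq0 (negbTE k0) => /eqP.
  have ey : y = y 0 (w 0) *: 'e_(w 0) + y 0 (w 1) *: 'e_(w 1).
    apply/matrixP => i j; rewrite ord1 ent.
    case: (eqVneq (w 0) j) => [<-|h0]; first by rewrite w01 mulr1 mulr0 addr0.
    case: (eqVneq (w 1) j) => [<-|h1]; first by rewrite mulr1 mulr0 add0r.
    by rewrite !mulr0 addr0 y0.
  exists (y 0 (w 0)), (y 0 (w 1)).
  by rewrite xy {1}ey mulmxDl -!scalemxAl -!rowE.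
- split; last split.
  + rewrite det22 !mxE /=.
    change (bf A (r 0) (r 0) * bf A (r 1) (r 1) - bf A (r 0) (r 1) * bf A (r 1) (r 0) != 0).
    rewrite (bfC sA (r 1) (r 0)).
    apply/negP => /eqP D0.
    set q0 := bf A (r 0) (r 0) in D0 *; set q1 := bf A (r 1) (r 1) in D0 *.
    set B := bf A (r 0) (r 1) in D0 *.
    pose x := (- B) *: r 0 + q0 *: r 1.
    have qx : bf A x x = 0.
      rewrite /x bf_span // -/q0 -/B -/q1.
      transitivity (q0 * (q0 * q1 - B * B)); first by ring.
      by rewrite D0 mulr0.
    have xP : in_span2 (r 0) (r 1) x by exists (- B), q0.
    case: (eqVneq x 0) => [x0|xn0]; last first.
      by case: (Panis x xP xn0); rewrite qx eqxx.
    have [_ q00] := rk (- B) q0 x0.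
    have r0P : in_span2 (r 0) (r 1) (r 0) by exists 1, 0; rewrite scale1r scale0r addr0.
    have r0n : r 0 != 0.
      apply/negP => /eqP r00; have := rk 1 0; rewrite scale1r scale0r addr0 r00.
      by case => // /eqP; rewrite oner_eq0.
    by case: (Panis _ r0P r0n); rewrite -/q0 q00 eqxx.
  + by exists u; split.
  + by exists v; split.
- move=> x hx x0; have [qn pq] := Panis x hx x0.
  change (p%:Z <= `|bf A x x|).
  rewrite -abszE lez_nat; apply: dvdn_leq; first by rewrite absz_gt0.
  by move: pq; rewrite dvdzE.
Qed.

Theorem mainTheorem5 (n : nat) (A : 'M[int]_n) (N : nat) :
  (5 <= n)%N -> sym_gram A -> lat_nondeg A -> lat_indef A ->
  exists u v : 'rV[int]_n,
    [/\ rank2 u v, primitive2 u v, sig11 A u v &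
        forall x, in_span2 u v x -> x != 0 -> (N%:Z <= `|bil A x x|)].
Proof.
move=> n5 sA dA [[x0 qx0] [y0 qy0]].
rewrite /sym_gram in sA; rewrite /lat_nondeg in dA.
have [p Np pP] := prime_above (N + 2 + `|\det A|)%N.
have p2 : (2 < p)%N by lia.
have pd : ~~ (p %| \det A)%Z.
  rewrite dvdzE /=; apply/negP => /dvdn_leq; rewrite absz_gt0 dA => /(_ isT); lia.
have qx0' : 0 < bf A x0 x0 by [].
have qy0' : bf A y0 y0 < 0 by [].
have [u [v [e [a [b [c [he ha hb hc [qu buv qv pos neg]]]]]]]] :=
  uv_exists pP p2 pd n5 sA qx0' qy0'.
have n2 : (2 <= n)%N by lia.
have [r0 [r1 [rk pr sg H]]] := final pP p2 n2 sA he ha hb hc qu buv qv pos neg.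
exists r0, r1; split => // x hx x0'; apply: le_trans (H x hx x0').
by rewrite lez_nat; lia.
Qed.
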